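(* Let $g(n) = \frac{(\log n)^2}{n} f(n)$ and \[ M = \limsup_{t\to\infty} \max_{1 \le s \le t} \frac{\log(R(s,t))}{\sqrt{st}}. \] Then $\limsup_{n\to\infty} g(n) \le M^2$.
   Context: All logarithms are in base 2. For positive integers $s,t$, the Ramsey number $R(s,t)$ is the minimum $n$ such that every red/blue edge-coloring of the complete graph $K_n$ contains a red clique on $s$ vertices or a blue clique on $t$ vertices. For a graph $G$, $\chi(G)$ is its chromatic number and $\omega(G)$ its clique number. For $n \in \mathbb{N}$, $f(n)$ is the maximum of $\chi(G)/\omega(G)$ over all graphs $G$ on $n$ vertices. *)

(* Defs.v *)
From HB Require Import structures.
From mathcomp Require Import all_boot all_order all_algebra.
From mathcomp Require Import all_classical all_reals all_analysis.
Set Implicit Arguments. Unset Strict Implicit. Unset Printing Implicit Defensive.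
Import Order.TTheory GRing.Theory Num.Theory.

Definition graph (n : nat) := {ffun 'I_n -> {ffun 'I_n -> bool}}.

Definition simple_graph n (G : graph n) : bool :=
  [forall x, ~~ G x x] && [forall x, forall y, G x y == G y x].

Definition is_clique n (G : graph n) (A : {set 'I_n}) : bool :=
  [forall x in A, forall y in A, (x != y) ==> G x y].

Definition clique_number n (G : graph n) : nat :=
  \max_(A : {set 'I_n} | is_clique G A) #|A|.

Definition proper_coloring n k (G : graph n) (c : {ffun 'I_n -> 'I_k}) : bool :=
  [forall x, forall y, G x y ==> (c x != c y)].

(* chromatic number chi(G): least k admitting a proper k-colouring
   (k = n always works, so the minimum is over k <= n). *)
Definition chromatic_number n (G : graph n) : nat :=
  \big[minn/n]_(k < n.+1 | [exists c : {ffun 'I_n -> 'I_k}, proper_coloring G c]) k.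

Local Open Scope ring_scope.

Definition f_ratio (R : realType) (n : nat) : R :=
  \big[Num.max/0]_(G : graph n | simple_graph G)
     ((chromatic_number G)%:R / (clique_number G)%:R).

Definition log2 (R : realType) (x : R) : R := ln x / ln 2.

Definition g_fun (R : realType) (n : nat) : R :=
  (log2 (n%:R : R)) ^+ 2 / n%:R * f_ratio R n.

Local Close Scope ring_scope.

(* Every red/blue colouring of the edges of K_n (a symmetric boolean matrix:
   true = red, false = blue) has a red K_s or a blue K_t. *)
Definition ramsey_prop (s t n : nat) : Prop :=
  forall c : {ffun 'I_n -> {ffun 'I_n -> bool}},
    (forall x y, c x y = c y x) ->
    (exists A : {set 'I_n}, #|A| = s /\
        forall x y, x \in A -> y \in A -> x != y -> c x y) \/
    (exists A : {set 'I_n}, #|A| = t /\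
        forall x y, x \in A -> y \in A -> x != y -> ~~ c x y).

Definition is_ramsey_number (s t r : nat) : Prop :=
  ramsey_prop s t r /\ forall n, ramsey_prop s t n -> (r <= n)%N.

(* Main.v *)
Require Import Defs.
From mathcomp Require Import all_boot all_order all_algebra.
From mathcomp Require Import zify.
Import Order.TTheory GRing.Theory Num.Theory.
Set Implicit Arguments. Unset Strict Implicit. Unset Printing Implicit Defensive.

Section Comb.
Variables (n : nat) (G : graph n).
Hypothesis HG : simple_graph G.

Lemma G_irr x : G x x = false.
Proof. by move: HG => /andP[/forallP H _]; apply/negbTE/H. Qed.

Lemma G_sym x y : G x y = G y x.
Proof. by move: HG => /andP[_ /forallP H]; move: (H x) => /forallP /(_ y) /eqP. Qed.

Definition hom (b : bool) (A : {set 'I_n}) :=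
  [forall x in A, forall y in A, (x != y) ==> (G x y == b)].

Lemma homP b (A : {set 'I_n}) : reflect (forall x y, x \in A -> y \in A -> x != y -> G x y = b) (hom b A).
Proof.
apply: (iffP forall_inP) => [H x y xA yA xy|H x xA].
  by move: (H x xA) => /forall_inP /(_ y yA) /implyP /(_ xy) /eqP.
by apply/forall_inP => y yA; apply/implyP => xy; apply/eqP; apply: H.
Qed.

Lemma hom_add b v (B : {set 'I_n}) : hom b B -> v \notin B -> (forall y, y \in B -> G v y = b) ->
  hom b (v |: B).
Proof.
move=> /homP H vB Hv; apply/homP => x y; rewrite !finset.in_setU1.
case/orP=> [/eqP->|xB]; case/orP=> [/eqP->|yB] //; first by rewrite eqxx.
- by move=> _; apply: Hv.
- by move=> _; rewrite G_sym; apply: Hv.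
- by apply: H.
Qed.

Lemma card_add v (B : {set 'I_n}) : v \notin B -> #|v |: B| = #|B|.+1.
Proof. by move=> vB; rewrite cardsU1 vB. Qed.

Lemma ES b (s t : nat) (A : {set 'I_n}) :
  (forall B : {set 'I_n}, B \subset A -> hom b B -> #|B| < s.+1) ->
  (forall B : {set 'I_n}, B \subset A -> hom (~~ b) B -> #|B| < t.+1) ->
  #|A| < 'C(s + t, s).
Proof.
elim: s t A => [|s IHs] t.
  move=> A H1 _; rewrite bin0 ltnS leqNgt; apply/negP => /card_gt0P [x xA].
  have : #|[set x]| < 1.
    apply: H1; first by rewrite finset.sub1set.
    by apply/homP => y z; rewrite !finset.in_set1 => /eqP-> /eqP->; rewrite eqxx.
  by rewrite cards1.
elim: t => [|t IHt] A H1 H2.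
  rewrite addn0 binn ltnS leqNgt; apply/negP => /card_gt0P [x xA].
  have : #|[set x]| < 1.
    apply: H2; first by rewrite finset.sub1set.
    by apply/homP => y z; rewrite !finset.in_set1 => /eqP-> /eqP->; rewrite eqxx.
  by rewrite cards1.
have [/eqP->|/set0Pn [v vA]] := boolP (A == set0); first by rewrite cards0 bin_gt0 leq_addr.
set N := [set y in A | (y != v) && (G v y == b)].
set Nc := [set y in A | (y != v) && (G v y != b)].
have sN : N \subset A by apply/subsetP => y; rewrite inE => /andP[].
have sNc : Nc \subset A by apply/subsetP => y; rewrite inE => /andP[].
have vN : v \notin N by rewrite inE eqxx andbF.
have vNc : v \notin Nc by rewrite inE eqxx andbF.
have hN : #|N| < 'C(s + t.+1, s).
  apply: IHs => B sB hB.
  - have vB : v \notin B by apply: contra vN => /(subsetP sB).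
    have := H1 (v |: B); rewrite card_add // ltnS; apply.
      by rewrite subUset finset.sub1set vA (subset_trans sB sN).
    apply: hom_add => // y /(subsetP sB); rewrite inE => /and3P[_ _ /eqP].
    done.
  - apply: H2 => //; exact: subset_trans sB sN.
have hNc : #|Nc| < 'C(s.+1 + t, s.+1).
  apply: IHt => B sB hB.
  - apply: H1 => //; exact: subset_trans sB sNc.
  - have vB : v \notin B by apply: contra vNc => /(subsetP sB).
    have := H2 (v |: B); rewrite card_add // ltnS; apply.
      by rewrite subUset finset.sub1set vA (subset_trans sB sNc).
    apply: hom_add => // y /(subsetP sB); rewrite inE => /and3P[_ _].
    have nb : forall c d : bool, c != d -> c = ~~ d by do 2 case.
    exact: nb.
have sA : A \subset v |: (N :|: Nc).
  apply/subsetP => y yA; rewrite !inE yA /=.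
  by case: (y == v); case: (G v y == b).
have cA : #|A| <= (#|N| + #|Nc|).+1.
  apply: (leq_trans (subset_leq_card sA)).
  apply: (leq_trans (leq_card_setU _ _)); rewrite cards1 add1n ltnS.
  exact: leq_card_setU.
have -> : s.+1 + t.+1 = (s + t.+1).+1 by rewrite addSn.
rewrite binS addnC.
have -> : s + t.+1 = s.+1 + t by rewrite addnS addSn.
rewrite addnS -addSn in hN. lia.
Qed.


Lemma nb (c d : bool) : c != d -> c = ~~ d.
Proof. by case: c; case: d. Qed.

Lemma ram_transfer b s t r (A : {set 'I_n}) : ramsey_prop s t r -> r <= #|A| ->
  (exists B : {set 'I_n}, [/\ B \subset A, hom b B & #|B| = s]) \/
  (exists B : {set 'I_n}, [/\ B \subset A, hom (~~ b) B & #|B| = t]).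
Proof.
move=> HR rA.
pose h (i : 'I_r) : 'I_n := enum_val (widen_ord rA i).
have hinj : injective h.
  move=> i j /enum_val_inj /(congr1 val) /= ij; exact: val_inj.
have hA i : h i \in A by exact: enum_valP.
pose c := [ffun x => [ffun y => G (h x) (h y) == b]].
have cs : forall x y, c x y = c y x by move=> x y; rewrite !ffunE G_sym.
have sub (B : {set 'I_r}) : h @: B \subset A.
  by apply/subsetP => _ /imsetP[x _ ->].
case: (HR c cs) => [[B [cB HB]]|[B [cB HB]]]; [left|right]; exists (h @: B);
  (split; [exact: sub| |by rewrite card_imset]); apply/homP => _ _ /imsetP[x xB ->] /imsetP[y yB ->] hxy;
  (have xy : x != y by apply: contra hxy => /eqP->); have := HB x y xB yB xy; rewrite !ffunE.
  by move/eqP.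
by apply: nb.
Qed.

Lemma colour t m : 0 < t ->
  (forall A : {set 'I_n}, m <= #|A| ->
     exists I : {set 'I_n}, [/\ I \subset A, hom false I & t <= #|I|]) ->
  forall A : {set 'I_n}, exists c : 'I_n -> nat,
    (forall x, x \in A -> c x < m + #|A| %/ t) /\
    (forall x y, x \in A -> y \in A -> G x y -> c x != c y).
Proof.
move=> t0 HI A.
suff H : forall N (A : {set 'I_n}), #|A| <= N -> exists c : 'I_n -> nat,
    (forall x, x \in A -> c x < m + #|A| %/ t) /\
    (forall x y, x \in A -> y \in A -> G x y -> c x != c y).
  exact: (H _ A (leqnn _)).
elim=> [|N IH] {}A hA.
  exists (fun _ => 0); split => [x xA|x y xA]; last by move: hA; rewrite leqn0 cards_eq0 => /eqP A0; rewrite A0 inE in xA.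
  by move: hA; rewrite leqn0 cards_eq0 => /eqP A0; rewrite A0 inE in xA.
case: (ltnP #|A| m) => hm.
  exists (fun x => index x (enum A)); split => [x xA|x y xA yA Gxy].
    have : index x (enum A) < size (enum A) by rewrite index_mem mem_enum.
    rewrite -cardE => h; apply: leq_trans h _; exact: leq_trans (ltnW hm) (leq_addr _ _).
  apply/eqP => ie.
  have xy : x = y.
    have i1 : nth x (enum A) (index x (enum A)) = x by rewrite nth_index // mem_enum.
    have i2 : nth y (enum A) (index y (enum A)) = y by rewrite nth_index // mem_enum.
    rewrite -i1 -i2 -ie; apply: set_nth_default.
    by rewrite index_mem mem_enum.
  by rewrite xy G_irr in Gxy.
have [I [sI hI tI]] := HI A hm.
set A' := A :\: I.
have cA' : #|A'| + #|I| = #|A|.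
  by rewrite /A' cardsD (setIidPr sI) subnK // subset_leq_card.
have [c' [c'b c'p]] := IH A' ltac:(lia).
have divlt : #|A'| %/ t < #|A| %/ t.
  have : (#|A'| + t) %/ t <= #|A| %/ t by apply: leq_div2r; lia.
  by rewrite divnDr ?dvdnn // divnn t0 addn1.
exists (fun x => if x \in I then m + #|A'| %/ t else c' x); split => [x xA|x y xA yA Gxy].
  case: ifP => xI; first by rewrite ltn_add2l.
  have xA' : x \in A' by rewrite inE xI xA.
  have := c'b x xA'; lia.
case: ifP => xI; case: ifP => yI.
- have xy : x != y by apply: contraTneq Gxy => ->; rewrite G_irr.
  by move/homP: hI => /(_ x y xI yI xy); rewrite Gxy.
- have yA' : y \in A' by rewrite inE yI yA.
  have := c'b y yA'; rewrite eq_sym; lia.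
- have xA' : x \in A' by rewrite inE xI xA.
  have := c'b x xA'; lia.
- have xA' : x \in A' by rewrite inE xI xA.
  have yA' : y \in A' by rewrite inE yI yA.
  exact: c'p.
Qed.

End Comb.

Lemma bigmin_le (I : eqType) (r : seq I) (P : pred I) (F : I -> nat) x0 i0 :
  i0 \in r -> P i0 -> \big[minn/x0]_(i <- r | P i) F i <= F i0.
Proof.
elim: r => // y r IH; rewrite in_cons big_cons => /orP [/eqP-> Pi | ir Pi].
  by rewrite Pi geq_minl.
case: (P y); last exact: IH.
by rewrite geq_min IH ?orbT.
Qed.

Lemma chromatic_le n (G : graph n) j :
  (exists c : {ffun 'I_n -> 'I_j}, proper_coloring G c) -> chromatic_number G <= j.
Proof.
move=> [c Hc]; rewrite /chromatic_number.
case: (leqP j n) => hj.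
  have hj' : j < n.+1 by [].
  have := @bigmin_le _ (index_enum 'I_n.+1)
    (fun k : 'I_n.+1 => [exists c : {ffun 'I_n -> 'I_k}, proper_coloring G c])
    (fun k => nat_of_ord k) n (Ordinal hj').
  rewrite mem_index_enum => /(_ isT); apply.
  by apply/existsP; exists c.
apply: leq_trans (ltnW hj).
apply: (big_ind (fun x => x <= n)) => //.
  by move=> x y xn _; rewrite geq_min xn.
by move=> i _; rewrite -ltnS.
Qed.

Lemma chromatic_bound n (G : graph n) t m : simple_graph G -> 0 < t ->
  (forall A : {set 'I_n}, m <= #|A| ->
     exists I : {set 'I_n}, [/\ I \subset A, hom G false I & t <= #|I|]) ->
  chromatic_number G <= m + n %/ t.
Proof.
move=> HG t0 HI.
have [c [cb cp]] := colour HG t0 HI [set: 'I_n].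
rewrite cardsT card_ord in cb.
have cb' : forall x, c x < m + n %/ t by move=> x; apply: cb; rewrite inE.
apply: chromatic_le.
exists [ffun x => Ordinal (cb' x)].
apply/forallP => x; apply/forallP => y; apply/implyP => Gxy.
rewrite !ffunE; apply/negP => /eqP /(congr1 val) /= /eqP.
by apply/negP; apply: cp; rewrite ?inE.
Qed.

Lemma bin_le_pow s t : 'C(s + t, s) <= t.+1 ^ s.
Proof.
elim: s => [|s IH]; first by rewrite bin0.
have h := mul_bin_diag (s.+1 + t) s.
rewrite addSn /= in h.
rewrite -(leq_pmul2l (ltn0Sn s)) addSn -h expnS.
rewrite mulnA mulnC [X in _ <= X]mulnC; apply: leq_mul => //.
nia.
Qed.


Definition IP n (G : graph n) t m := forall A : {set 'I_n}, m <= #|A| ->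
  exists I : {set 'I_n}, [/\ I \subset A, hom G false I & t <= #|I|].

Lemma cl_bound n (G : graph n) (B : {set 'I_n}) : hom G true B -> #|B| <= clique_number G.
Proof.
move=> /homP H; apply: (@leq_bigmax_cond _ (fun A => is_clique G A) (fun A => #|A|)).
apply/forall_inP => x xB; apply/forall_inP => y yB; apply/implyP => xy.
exact: H.
Qed.

Lemma IP_ES n (G : graph n) (HG : simple_graph G) k t' m :
  (forall B, hom G true B -> #|B| <= k) -> 'C(k + t', k) <= m -> IP G t'.+1 m.
Proof.
move=> Hk Hm A hA.
case: (boolP [exists I : {set 'I_n}, [&& I \subset A, hom G false I & t'.+1 <= #|I|]]).
  by move=> /existsP [I /and3P[h1 h2 h3]]; exists I.
move=> /existsPn H; exfalso.
have := @ES n G HG true k t' A.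
have h : #|A| < 'C(k + t', k) -> False by move=> h; have := leq_trans h (leq_trans Hm hA); rewrite ltnn.
move=> /(_ _ _) h2; apply: h; apply: h2.
  by move=> B _ hB; rewrite ltnS; apply: Hk.
move=> B sB hB; rewrite ltnNge; have := H B; rewrite sB (hB : hom G false B); by [].
Qed.

Lemma ram_pos (Ram : nat -> nat -> nat)
  (HRam : forall s t, 0 < s -> 0 < t -> is_ramsey_number s t (Ram s t)) s t :
  0 < s -> 0 < t -> 0 < Ram s t.
Proof.
move=> s0 t0; have [HR _] := HRam s t s0 t0.
case E: (Ram s t) HR => [|r] // HR.
pose c := [ffun x : 'I_0 => [ffun y : 'I_0 => true]].
have cs : forall x y : 'I_0, c x y = c y x by case.
case: (HR c cs) => [[B [cB _]]|[B [cB _]]].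
- by move: (max_card B); rewrite cB card_ord leqn0 => /eqP s00; rewrite s00 in s0.
- by move: (max_card B); rewrite cB card_ord leqn0 => /eqP s00; rewrite s00 in t0.
Qed.

Lemma IP_Ram1 n (G : graph n) (HG : simple_graph G) (Ram : nat -> nat -> nat)
  (HRam : forall s t, 0 < s -> 0 < t -> is_ramsey_number s t (Ram s t)) k t :
  0 < t -> (forall B, hom G true B -> #|B| <= k) -> IP G t (Ram k.+1 t).
Proof.
move=> t0 Hk A hA; have [HR _] := HRam k.+1 t isT t0.
case: (ram_transfer HG true HR hA) => [[B [sB hB cB]]|[B [sB hB cB]]].
  by have := Hk B hB; rewrite cB ltnn.
by exists B; split => //; rewrite cB.
Qed.

Lemma IP_Ram2 n (G : graph n) (HG : simple_graph G) (Ram : nat -> nat -> nat)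
  (HRam : forall s t, 0 < s -> 0 < t -> is_ramsey_number s t (Ram s t)) k t :
  0 < t -> (forall B, hom G true B -> #|B| <= k) -> IP G t (Ram t k.+1).
Proof.
move=> t0 Hk A hA; have [HR _] := HRam t k.+1 t0 isT.
case: (ram_transfer HG false HR hA) => [[B [sB hB cB]]|[B [sB hB cB]]].
  by exists B; split => //; rewrite cB.
by have := Hk B hB; rewrite cB ltnn.
Qed.

Lemma chromatic_le_n n (G : graph n) : chromatic_number G <= n.
Proof.
apply: (big_ind (fun x => x <= n)) => //.
  by move=> x y xn _; rewrite geq_min xn.
by move=> i _; rewrite -ltnS.
Qed.

From mathcomp Require Import all_classical all_reals all_analysis.
From mathcomp Require Import ring lra.
Import Order.TTheory GRing.Theory Num.Theory.
Local Open Scope ring_scope.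

Lemma chi_real (R : realType) n (G : graph n) (HG : simple_graph G) t m :
  (0 < t)%N -> IP G t m ->
  (chromatic_number G)%:R <= m%:R + n%:R / t%:R :> R.
Proof.
move=> t0 HI; have h := chromatic_bound HG t0 HI.
apply: le_trans (_ : (m + n %/ t)%:R <= _); first by rewrite ler_nat.
rewrite natrD lerD2l ler_pdivlMr ?ltr0n // -natrM ler_nat.
exact: leq_divM.
Qed.

Section RealFacts.
Variable R : realType.

Lemma trunc_bounds (y : R) : 0 <= y -> ((Num.trunc y)%:R <= y) /\ (y < (Num.trunc y)%:R + 1).
Proof.
move=> y0; split; first by rewrite truncn_le.
by have := truncn_le_nat y (Num.trunc y); rewrite leqnn -addn1 natrD => /esym.
Qed.

Lemma exp_dom (al C D : R) : 0 < al -> 0 <= C ->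
  exists X : R, 1 <= X /\ forall x, X <= x -> C * x ^+ 2 + D <= expR (al * x).
Proof.
move=> a0 C0.
have a30 : 0 < al ^+ 3 by apply: exprn_gt0.
have hCD : 0 <= C + `|D| by apply: addr_ge0.
have hq : 0 <= 6 * (C + `|D|) / al ^+ 3.
  apply: divr_ge0; last exact: ltW.
  apply: mulr_ge0 => //.
exists (1 + 6 * (C + `|D|) / al ^+ 3); split.
  lra.
move=> x hx.
have x1 : 1 <= x.
  lra.
have ax0 : 0 <= al * x by apply: mulr_ge0; lra.
have h := expR_ge1Dxn 2 ax0.
have e6 : ((2.+1)`!)%:R = 6 :> R by [].
rewrite e6 in h.
apply: le_trans h.
have h1 : al ^+ 3 * x >= 6 * (C + `|D|).
  have : al ^+ 3 * (1 + 6 * (C + `|D|) / al ^+ 3) <= al ^+ 3 * x by rewrite ler_pM2l.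
  rewrite mulrDr mulr1 mulrCA divff ?mulr1; last by rewrite gt_eqF.
  have : 0 <= al ^+ 3 by apply: ltW.
  lra.
have x2 : 1 <= x ^+ 2 by rewrite expr2; nra.
have hD : D <= `|D| by apply: ler_norm.
rewrite exprMn.
have : (al ^+ 3 * x) * x ^+ 2 >= 6 * (C + `|D|) * x ^+ 2.
  by apply: ler_wpM2r => //; lra.
have -> : x ^+ 3 = x * x ^+ 2 by rewrite exprS.
rewrite mulrA.
have hD2 : D <= `|D| * x ^+ 2.
  have : 0 <= `|D| by [].
  nra.
lra.
Qed.

End RealFacts.

Lemma R2alg (R : realType) (a e th u k t y : R) : 0 < a -> 0 < e -> e <= 1/12 ->
  1 - e <= th ^+ 2 -> th ^+ 2 <= 1 -> 1 <= e * k -> 1 <= k ->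
  a ^+ 2 * k <= e * u ^+ 2 -> a ^+ 2 <= e * u ^+ 2 ->
  y = th ^+ 2 * u ^+ 2 / (a ^+ 2 * (k + 1)) -> t <= y -> y < t + 1 -> 0 <= t ->
  u ^+ 2 <= k * (a ^+ 2 * (1 + 6 * e)) * t.
Proof.
move=> a0 e0 e1 th1 th2 ek k1 h1 h2 -> ty yt t0.
have a2 : 0 < a ^+ 2 by apply: exprn_gt0.
have k0 : 0 < a ^+ 2 * (k + 1) by apply: mulr_gt0 => //; lra.
have u2 : 0 <= u ^+ 2 by apply: sqr_ge0.
have A : th ^+ 2 * u ^+ 2 < a ^+ 2 * (k + 1) * (t + 1).
  by rewrite -ltr_pdivrMl // mulrC.
have B : a ^+ 2 * (k + 1) * t <= th ^+ 2 * u ^+ 2.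
  by rewrite mulrC -ler_pdivlMr.
have C : a ^+ 2 * t * (k + 1) <= u ^+ 2.
  have : th ^+ 2 * u ^+ 2 <= u ^+ 2 by nra.
  lra.
have D : a ^+ 2 * t <= e * u ^+ 2.
  have : a ^+ 2 * t * (e * k) <= e * u ^+ 2.
    have : a ^+ 2 * t * (e * k) <= a ^+ 2 * t * (k + 1) * e.
      have : 0 <= a ^+ 2 * t by apply: mulr_ge0 => //; apply: ltW.
      nra.
    have : a ^+ 2 * t * (k + 1) * e <= u ^+ 2 * e by apply: ler_wpM2r => //; apply: ltW.
    lra.
  have : 0 <= a ^+ 2 * t by apply: mulr_ge0 => //; apply: ltW.
  nra.
have E : (1 - 4 * e) * u ^+ 2 <= a ^+ 2 * k * t by nra.
have F : 0 <= (2 * e - 24 * e ^+ 2) * u ^+ 2.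
  apply: mulr_ge0 => //; nra.
nra.
Qed.

Lemma le_of_eq' (R : realType) (x y : R) : x = y -> x <= y.
Proof. by move->. Qed.

Lemma div_bound (R : realType) (n t u Z : R) : 0 < t -> 0 < u -> 0 <= n ->
  u ^+ 2 <= Z * t -> n / t <= Z * (n / u ^+ 2).
Proof.
move=> t0 u0 n0 h.
have u2 : 0 < u ^+ 2 by apply: exprn_gt0.
have h' : t^-1 <= Z / u ^+ 2 by rewrite ler_pdivlMr // mulrC ler_pdivrMr.
apply: le_trans (ler_wpM2l n0 h') _; by rewrite mulrCA.
Qed.

Section Core.
Variable R : realType.
Variable Ram : nat -> nat -> nat.
Hypothesis HRam : forall s t, (0 < s)%N -> (0 < t)%N -> is_ramsey_number s t (Ram s t).
Variables (a d : R) (T0 : nat).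
Hypotheses (a0 : 0 < a) (d0 : 0 < d) (d1 : d <= 1).
Hypothesis HT : forall s t, (1 <= s)%N -> (s <= t)%N -> (T0 <= t)%N ->
  log2 ((Ram s t)%:R : R) <= a * Num.sqrt ((s * t)%:R).

Definition eta := d / 12.
Definition th := 1 - eta / 2.
Definition P : nat := (Num.trunc (1 / eta)).+1.
Definition K : nat := maxn T0 P.

Lemma eta_pos : 0 < eta.
Proof. by rewrite /eta divr_gt0. Qed.

Lemma eta_le : eta <= 1 / 12.
Proof. by rewrite /eta ler_pM2r. Qed.

Lemma P_ge : 1 <= eta * P%:R.
Proof.
have e0 := eta_pos.
have [_ h] := trunc_bounds (ltW (divr_gt0 ltr01 e0)).
rewrite /P -addn1 natrD.
have e1 : eta * (1 / eta) = 1 by rewrite mul1r mulfV // gt_eqF.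
rewrite -{1}e1; apply: ler_wpM2l; [exact: ltW | exact: ltW h].
Qed.

Lemma K_ge : 1 <= eta * K%:R.
Proof.
apply: le_trans P_ge _; apply: ler_wpM2l; first exact: ltW eta_pos.
by rewrite ler_nat leq_maxr.
Qed.

Lemma P_pos : (0 < P)%N. Proof. by []. Qed.
Lemma K_pos : (0 < K)%N. Proof. by rewrite /K leq_max P_pos orbT. Qed.

Lemma th_facts : [/\ 0 < th, th <= 1, 1 - eta <= th ^+ 2 & th ^+ 2 <= 1].
Proof.
have e0 := eta_pos; have e1 := eta_le.
rewrite /th; split; [lra|lra|nra|nra].
Qed.

Lemma ln2_pos : 0 < ln (2 : R).
Proof. by apply: ln_gt0; rewrite ltr1n. Qed.

Lemma log2_exp (m : nat) (z : R) : (0 < m)%N -> log2 (m%:R : R) <= z / ln 2 ->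
  m%:R <= expR z.
Proof.
move=> m0; rewrite /log2 ler_pM2r ?invr_gt0 ?ln2_pos // => h.
rewrite -[X in X <= _](@lnK _ m%:R); last by rewrite posrE ltr0n.
by rewrite ler_expR.
Qed.

Lemma graph_bound n (G : graph n) (HG : simple_graph G) (x : R) :
  (1 <= n)%N -> 1 <= x ->
  (x / ln 2) ^+ 2 * expR (th * x) <= a ^+ 2 * d / 2 * n%:R ->
  (x / ln 2) ^+ 2 / a ^+ 2 + 1 <= expR (th / K%:R * x) ->
  (x / ln 2) ^+ 2 / a ^+ 2 + 1 <= expR (th / P%:R * x) ->
  2 * a ^+ 2 + a ^+ 2 / eta <= (x / ln 2) ^+ 2 ->
  (chromatic_number G)%:R <=
    (clique_number G)%:R * (a ^+ 2 * (1 + d) * (n%:R / (x / ln 2) ^+ 2)).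
Proof.
move=> n1 x1 E1 E2 E4 E5.
have l2 := ln2_pos.
have e0 := eta_pos; have e1 := eta_le.
have [th0 th1 th2 th3] := th_facts.
set u := x / ln 2.
rewrite -/u in E1 E2 E4 E5.
set W := n%:R / u ^+ 2.
set k := clique_number G.
have u0 : 0 < u by rewrite /u divr_gt0 //; lra.
have u2 : 0 < u ^+ 2 by apply: exprn_gt0.
have n0 : 0 < n%:R :> R by rewrite ltr0n.
have W0 : 0 < W by rewrite /W divr_gt0.
have a2 : 0 < a ^+ 2 by apply: exprn_gt0.
have Hk : forall B, hom G true B -> (#|B| <= k)%N by move=> B; apply: cl_bound.
have k1 : (1 <= k)%N.
  have := Hk [set Ordinal n1]; rewrite cards1; apply.
  by apply/homP => y z; rewrite !inE => /eqP-> /eqP->; rewrite eqxx.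
have k1r : 1 <= k%:R :> R by rewrite ler1n.
have EW : expR (th * x) <= a ^+ 2 * d / 2 * W.
  by rewrite /W mulrA ler_pdivlMr // mulrC.
have fin : forall m t, (0 < t)%N -> IP G t m -> m%:R <= expR (th * x) ->
    u ^+ 2 <= k%:R * (a ^+ 2 * (1 + 6 * eta)) * t%:R ->
    (chromatic_number G)%:R <= k%:R * (a ^+ 2 * (1 + d) * W).
  move=> m t t0 HI hm hu.
  have h1 := chi_real R HG t0 HI.
  have tr0 : 0 < t%:R :> R by rewrite ltr0n.
  have h2 := div_bound tr0 u0 (ltW n0) hu.
  have h3 : a ^+ 2 * d / 2 * W <= k%:R * (a ^+ 2 * d / 2 * W).
    apply: ler_peMl => //; apply: mulr_ge0; last exact: ltW.
    by apply: mulr_ge0; [apply: mulr_ge0; [exact: ltW|exact: ltW]|].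
  rewrite -/W in h2.
  have hd : 6 * eta = d / 2 by rewrite /eta; field.
  rewrite hd in h2.
  have : k%:R * (a ^+ 2 * (1 + d) * W) =
      k%:R * (a ^+ 2 * d / 2 * W) + k%:R * (a ^+ 2 * (1 + d / 2)) * W.
    by field.
  lra.
case: (ltnP k K) => hkK.
  set y := expR (th / K%:R * x).
  rewrite -/y in E2.
  set t := Num.trunc y.
  have [ty1 ty2] := trunc_bounds (ltW (expR_gt0 (th / K%:R * x))).
  rewrite -/y -/t in ty1 ty2.
  have tu : u ^+ 2 / a ^+ 2 <= t%:R by lra.
  have t0 : (0 < t)%N.
    rewrite -(ltr0n R); apply: lt_le_trans tu; exact: divr_gt0.
  apply: (fin (t ^ k)%N t t0).
  - have := IP_ES HG (t' := t.-1) (m := (t ^ k)%N) Hk; rewrite prednK //; apply.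
    by have := bin_le_pow k t.-1; rewrite prednK.
  - rewrite natrX.
    have Kpos : K%:R != 0 :> R by rewrite pnatr_eq0 -lt0n K_pos.
    apply: (@le_trans _ _ (t%:R ^+ K)).
      by apply: ler_weXn2l; [rewrite ler1n|exact: ltnW].
    apply: (@le_trans _ _ (y ^+ K)).
      by apply: lerXn2r; rewrite ?nnegrE ?ler0n ?expR_ge0.
    have e : K%:R * (th / K%:R * x) = th * x by field.
    by rewrite /y -expRM_natl e.
  - have h : u ^+ 2 <= a ^+ 2 * t%:R by move: tu; rewrite ler_pdivrMr // mulrC.
    have : 1 <= k%:R * (1 + 6 * eta) by nra.
    have : 0 <= a ^+ 2 * t%:R by apply: mulr_ge0; [exact: ltW|exact: ler0n].
    nra.
have Kk : (T0 <= k)%N.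
  apply: (leq_trans _ hkK); rewrite /K; exact: leq_maxl.
have eK : 1 <= eta * k%:R.
  by apply: le_trans K_ge _; apply: ler_wpM2l; [exact: ltW|rewrite ler_nat].
have au : a ^+ 2 <= eta * u ^+ 2.
  have : a ^+ 2 / eta <= u ^+ 2 by lra.
  by rewrite ler_pdivrMr // mulrC.
case: (lerP (a ^+ 2 * k%:R) (eta * u ^+ 2)) => hk2.
  set y := th ^+ 2 * u ^+ 2 / (a ^+ 2 * (k%:R + 1)).
  have k0 : 0 < a ^+ 2 * (k%:R + 1) by apply: mulr_gt0 => //; lra.
  have y1 : 1 <= y.
    rewrite /y ler_pdivlMr // mul1r.
    have : (1 - eta) * u ^+ 2 <= th ^+ 2 * u ^+ 2 by apply: ler_wpM2r => //; exact: ltW.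
    have h2a : 0 <= a ^+ 2 / eta by apply: divr_ge0; apply: ltW.
    have : 2 * a ^+ 2 <= u ^+ 2 by lra.
    nra.
  set t := Num.trunc y.
  have [ty1 ty2] := trunc_bounds (le_trans ler01 y1).
  rewrite -/t in ty1 ty2.
  have t0 : (0 < t)%N by rewrite -(ltr0n R); lra.
  have kt : ((k.+1 * t)%:R : R) <= (th * u / a) ^+ 2.
    rewrite natrM -addn1 natrD.
    have -> : (th * u / a) ^+ 2 = (k%:R + 1) * y.
      rewrite /y; field; apply/andP; split; first by rewrite gt_eqF.
      by rewrite gt_eqF //; lra.
    by apply: ler_wpM2l => //; lra.
  have sq : a * Num.sqrt ((k.+1 * t)%:R) <= th * x / ln 2.
    have := ler_wsqrtr kt; rewrite sqrtr_sqr ger0_norm; last first.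
      by apply: divr_ge0; [apply: mulr_ge0; apply: ltW|apply: ltW].
    move=> h; rewrite -ler_pdivlMl // mulrC -mulrA.
    by apply: le_trans h _; rewrite /u mulrA.
  have main : u ^+ 2 <= k%:R * (a ^+ 2 * (1 + 6 * eta)) * t%:R.
    apply: (R2alg a0 e0 e1 th2 th3 eK k1r hk2 au (erefl _) ty1 ty2).
    exact: ler0n.
  case: (leqP k.+1 t) => hkt.
    apply: (fin (Ram k.+1 t) t t0 (IP_Ram1 HG HRam t0 Hk)) => //.
    apply: log2_exp; first exact: ram_pos.
    apply: le_trans sq; apply: HT => //.
    by apply: leq_trans hkt; apply: leq_trans Kk _.
  apply: (fin (Ram t k.+1) t t0 (IP_Ram2 HG HRam t0 Hk)) => //.
  apply: log2_exp; first exact: ram_pos.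
  apply: le_trans sq; rewrite mulnC; apply: HT => //.
    exact: ltnW.
  exact: leq_trans Kk _.
have PK : P%:R != 0 :> R by rewrite pnatr_eq0.
case: (boolP (((k.+1 ^ P)%N)%:R <= expR (th * x) :> R)) => hP.
  apply: (fin (k.+1 ^ P)%N P.+1 isT) => //.
    apply: (IP_ES HG (t' := P) Hk).
    rewrite -bin_sub ?leq_addr // addKn addnC; exact: bin_le_pow.
  have hPe := P_ge.
  have : u ^+ 2 <= eta * u ^+ 2 * P%:R by nra.
  have -> : (P.+1)%:R = P%:R + 1 :> R by rewrite -addn1 natrD.
  have : 0 <= eta * P%:R by apply: mulr_ge0; [exact: ltW|exact: ler0n].
  have : 0 <= k%:R * (a ^+ 2 * (1 + 6 * eta)) by apply: mulr_ge0; [exact: ler0n|nra].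
  nra.
rewrite -ltNge in hP.
have hy : expR (th / P%:R * x) < k.+1%:R.
  have : expR (th / P%:R * x) ^+ P < k.+1%:R ^+ P.
    have e : P%:R * (th / P%:R * x) = th * x by field.
    by rewrite -expRM_natl -natrX e.
  by move=> h; rewrite -(@ltr_pXn2r _ P) // ?nnegrE ?ler0n ?expR_ge0.
have hku : u ^+ 2 <= a ^+ 2 * k%:R.
  have e1k : (k.+1)%:R = k%:R + 1 :> R by rewrite -addn1 natrD.
  rewrite e1k in hy.
  have : u ^+ 2 / a ^+ 2 <= k%:R by lra.
  by move=> h; move: h; rewrite ler_pdivrMr // mulrC.
apply: (@le_trans _ _ n%:R); first by rewrite ler_nat chromatic_le_n.
have -> : n%:R = u ^+ 2 * W :> R by rewrite /W mulrC divfK // gt_eqF.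
have : 0 <= d * W by apply: mulr_ge0; apply: ltW.
have : u ^+ 2 * W <= a ^+ 2 * k%:R * W by apply: ler_wpM2r => //; exact: ltW.
have : 0 <= k%:R * a ^+ 2 * (d * W).
  apply: mulr_ge0; last by apply: mulr_ge0; apply: ltW.
  by apply: mulr_ge0; [exact: ler0n|exact: ltW].
nra.
Qed.

End Core.

Section Final.
Variable R : realType.

Lemma limn_esup_le_ev (u : nat -> R) b N : (forall n, (N <= n)%N -> u n <= b) ->
  (limn_esup (fun n => (u n)%:E) <= b%:E)%E.
Proof.
move=> H; rewrite /limn_esup limf_esupE.
apply: (@le_trans _ _ (ereal_sup ((fun n => (u n)%:E) @` [set n : nat | (N <= n)%N]%classic))).
  apply: ereal_inf_lbound; exists [set n : nat | (N <= n)%N]%classic => //; by exists N.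
apply: ge_ereal_sup => _ [n hn <-]; rewrite lee_fin; exact: H.
Qed.

Variable Ram : nat -> nat -> nat.
Hypothesis HRam : forall s t, (0 < s)%N -> (0 < t)%N -> is_ramsey_number s t (Ram s t).

Lemma f_bound (a d : R) (T0 : nat) : 0 < a -> 0 < d -> d <= 1 ->
  (forall s t, (1 <= s)%N -> (s <= t)%N -> (T0 <= t)%N ->
     log2 ((Ram s t)%:R : R) <= a * Num.sqrt ((s * t)%:R)) ->
  exists N : nat, forall n, (N <= n)%N -> g_fun R n <= a ^+ 2 * (1 + d).
Proof.
move=> a0 d0 d1 HT.
have l2 := @ln2_pos R.
have e0 := @eta_pos R d d0; have e1 := @eta_le R d d1.
have [th0 th1 th2 th3] := @th_facts R d d0 d1.
have a2 : 0 < a ^+ 2 by apply: exprn_gt0.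
have l22 : 0 < ln (2 : R) ^+ 2 by apply: exprn_gt0.
have Kp : 0 < (K d T0)%:R :> R by rewrite ltr0n K_pos.
have Pp : 0 < (P d)%:R :> R by rewrite ltr0n.
have p1 : 0 < 1 - th d by rewrite /th; lra.
have p2 : 0 <= 2 / (a ^+ 2 * d * ln 2 ^+ 2).
  apply: ltW; apply: divr_gt0 => //; apply: mulr_gt0 => //; exact: mulr_gt0.
have p3 : 0 < th d / (K d T0)%:R by exact: divr_gt0.
have p4 : 0 < th d / (P d)%:R by exact: divr_gt0.
have p5 : 0 <= 1 / (ln 2 ^+ 2 * a ^+ 2).
  apply: ltW; apply: divr_gt0 => //; exact: mulr_gt0.
have [X1 [X11 HX1]] := @exp_dom R (1 - th d) (2 / (a ^+ 2 * d * ln 2 ^+ 2)) 0 p1 p2.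
have [X2 [X21 HX2]] := @exp_dom R (th d / (K d T0)%:R) (1 / (ln 2 ^+ 2 * a ^+ 2)) 1 p3 p5.
have [X4 [X41 HX4]] := @exp_dom R (th d / (P d)%:R) (1 / (ln 2 ^+ 2 * a ^+ 2)) 1 p4 p5.
set X5 := 1 + (2 * a ^+ 2 + a ^+ 2 / eta d) * ln 2 ^+ 2.
have X5ge : 1 <= X5.
  have : 0 <= (2 * a ^+ 2 + a ^+ 2 / eta d) * ln 2 ^+ 2.
    apply: mulr_ge0; last exact: ltW.
    apply: addr_ge0; first by apply: mulr_ge0 => //; apply: ltW.
    by apply: divr_ge0; apply: ltW.
  rewrite /X5; lra.
set X := Num.max (Num.max X1 X2) (Num.max X4 X5).
have [tX1 tX2] := trunc_bounds (expR_ge0 X).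
exists (Num.trunc (expR X)).+1 => n hn.
have n0 : (0 < n)%N by apply: leq_trans hn.
have nr0 : 0 < n%:R :> R by rewrite ltr0n.
set x := ln (n%:R : R).
have nx : n%:R = expR x by rewrite /x lnK // posrE.
have Xx : X <= x.
  rewrite /x -[X in X <= _]expRK ler_ln ?posrE ?expR_gt0 //.
  apply: ltW; apply: lt_le_trans tX2 _.
  apply: le_trans (_ : ((Num.trunc (expR X)).+1)%:R <= _); last by rewrite ler_nat.
  by rewrite -addn1 natrD.
have hX1 : X1 <= x by apply: le_trans Xx; rewrite /X !le_max lexx.
have hX2 : X2 <= x by apply: le_trans Xx; rewrite /X !le_max lexx !orbT.
have hX4 : X4 <= x by apply: le_trans Xx; rewrite /X !le_max lexx !orbT.
have hX5 : X5 <= x by apply: le_trans Xx; rewrite /X !le_max lexx !orbT.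
have x1 : 1 <= x by apply: le_trans hX5.
set u := x / ln 2.
have u0 : 0 < u by rewrite /u divr_gt0 //; lra.
have u2 : 0 < u ^+ 2 by apply: exprn_gt0.
have uE : u ^+ 2 = x ^+ 2 / ln 2 ^+ 2 by rewrite /u expr_div_n.
have E1 : u ^+ 2 * expR (th d * x) <= a ^+ 2 * d / 2 * n%:R.
  have h := HX1 x hX1; rewrite addr0 in h.
  rewrite nx.
  have -> : expR x = expR ((1 - th d) * x) * expR (th d * x) by rewrite -expRD; congr expR; ring.
  rewrite mulrA; apply: ler_wpM2r; first exact: expR_ge0.
  apply: le_trans (_ : a ^+ 2 * d / 2 * (2 / (a ^+ 2 * d * ln 2 ^+ 2) * x ^+ 2) <= _).
    apply: le_of_eq'; rewrite uE; field.
    by rewrite !gt_eqF.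
  apply: ler_wpM2l => //; apply: divr_ge0; last by [].
  by apply: mulr_ge0; apply: ltW.
have E2 : u ^+ 2 / a ^+ 2 + 1 <= expR (th d / (K d T0)%:R * x).
  apply: le_trans (HX2 x hX2); apply: le_of_eq'; rewrite uE; field.
  by rewrite !gt_eqF.
have E4 : u ^+ 2 / a ^+ 2 + 1 <= expR (th d / (P d)%:R * x).
  apply: le_trans (HX4 x hX4); apply: le_of_eq'; rewrite uE; field.
  by rewrite !gt_eqF.
have E5 : 2 * a ^+ 2 + a ^+ 2 / eta d <= u ^+ 2.
  rewrite uE ler_pdivlMr //.
  have : x <= x ^+ 2 by rewrite expr2; nra.
  rewrite /X5 in hX5; lra.
set B := a ^+ 2 * (1 + d).
have hf : f_ratio R n <= B * (n%:R / u ^+ 2).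
  apply: bigmax_le.
    apply: mulr_ge0; first by apply: mulr_ge0; [apply: ltW|lra].
    by apply: divr_ge0; apply: ltW.
  move=> G HG.
  have hb := @graph_bound R Ram HRam a d T0 a0 d0 d1 HT n G HG x n0 x1 E1 E2 E4 E5.
  rewrite -/u in hb.
  have [k0|k0] := eqVneq ((clique_number G)%:R : R) 0.
    rewrite k0 invr0 mulr0.
    apply: mulr_ge0; first by apply: mulr_ge0; [apply: ltW|lra].
    by apply: divr_ge0; apply: ltW.
  have kp : 0 < (clique_number G)%:R :> R by rewrite lt0r k0 ler0n.
  by rewrite ler_pdivrMr // mulrC.
rewrite /g_fun /log2 -/x -/u.
apply: le_trans (_ : u ^+ 2 / n%:R * (B * (n%:R / u ^+ 2)) <= _).
  apply: ler_wpM2l => //; apply: divr_ge0; apply: ltW => //.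
apply: le_of_eq'; rewrite /B; field.
by rewrite !gt_eqF.
Qed.

End Final.

Lemma theorem_aux (R : realType) (Ram : nat -> nat -> nat)
  (HRam : forall s t, (0 < s)%N -> (0 < t)%N -> is_ramsey_number s t (Ram s t))
  (M : \bar R) (HM : M = limn_esup (fun t : nat =>
      (\big[Num.max/0]_(1 <= s < t.+1)
         (log2 ((Ram s t)%:R : R) / Num.sqrt ((s * t)%:R)))%R%:E)) :
  (limn_esup (fun n : nat => (g_fun R n)%:E) <= M * M)%E.
Proof.
have M0 : (0 <= M)%E.
  rewrite HM /limn_esup; apply: limf_esup_ge0.
    by move=> [N _ /(_ N (leqnn N))].
  by move=> t; rewrite lee_fin; exact: bigmax_ge_id.
have key : forall c : R, (M < c%:E)%E -> exists T0 : nat, forall s t, (1 <= s)%N -> (s <= t)%N ->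
    (T0 <= t)%N -> log2 ((Ram s t)%:R : R) <= c * Num.sqrt ((s * t)%:R).
  move=> c; rewrite HM /limn_esup limf_esupE => Mc.
  have [y [V [N _ HN] <-] yc] := ereal_inf_lt Mc.
  exists N => s t s1 st Nt.
  have tV : V t by apply: HN.
  have hb : ((\big[Num.max/0]_(1 <= s0 < t.+1)
      (log2 ((Ram s0 t)%:R : R) / Num.sqrt ((s0 * t)%:R)))%:E < c%:E)%E.
    apply: le_lt_trans yc; apply: ereal_sup_ubound; by exists t.
  rewrite lte_fin in hb.
  have hs : log2 ((Ram s t)%:R : R) / Num.sqrt ((s * t)%:R) <= c.
    apply: le_trans (ltW hb).
    apply: (@le_bigmax_seq _ _ _ (index_iota 1 t.+1) 0 s xpredT
      (fun s => log2 ((Ram s t)%:R : R) / Num.sqrt ((s * t)%:R))) => //.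
    by rewrite mem_index_iota s1 ltnS.
  have sp : 0 < Num.sqrt ((s * t)%:R) :> R.
    by rewrite sqrtr_gt0 ltr0n muln_gt0 s1 (leq_trans s1 st).
  by move: hs; rewrite ler_pdivrMr.
clear HM.
case: M M0 key => [r| |] M0 key; last by [].
  rewrite -EFinM; apply/lee_addgt0Pr => e e0.
  have r0 : 0 <= r by rewrite -lee_fin.
  set h := e / (8 * r + 8 + e).
  have hd : 0 < 8 * r + 8 + e by lra.
  have he : h * (8 * r + 8 + e) = e by rewrite /h divfK // gt_eqF.
  have h0 : 0 < h by rewrite /h divr_gt0.
  set a := r + h.
  have a0 : 0 < a by rewrite /a; lra.
  set dd := e / (2 * a ^+ 2 + 2 + e).
  have dd1 : 0 < 2 * a ^+ 2 + 2 + e by have := sqr_ge0 a; lra.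
  have dde : dd * (2 * a ^+ 2 + 2 + e) = e by rewrite /dd divfK // gt_eqF.
  have dd0 : 0 < dd by rewrite /dd divr_gt0.
  have ddle : dd <= 1.
    have := sqr_ge0 a; nra.
  have [T0 HT] := key a ltac:(rewrite lte_fin /a; lra).
  have [N HN] := f_bound HRam a0 dd0 ddle HT.
  apply: le_trans (limn_esup_le_ev HN) _.
  rewrite -EFinD lee_fin.
  have h1 : h <= 1 by nra.
  have ha : a ^+ 2 <= r * r + e / 4.
    rewrite /a expr2.
    have : h * h <= h by nra.
    nra.
  have hdd : a ^+ 2 * dd <= e / 2.
    have := sqr_ge0 a; nra.
  nra.
by rewrite mulyy leey.
Qed.

Theorem theorem2p2 (R : realType) (Ram : nat -> nat -> nat)
  (HRam : forall s t, (0 < s)%N -> (0 < t)%N -> is_ramsey_number s t (Ram s t)) :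
  let M : \bar R :=
    limn_esup (fun t : nat =>
      (\big[Num.max/0]_(1 <= s < t.+1)
         (log2 ((Ram s t)%:R : R) / Num.sqrt ((s * t)%:R)))%R%:E) in
  (limn_esup (fun n : nat => (g_fun R n)%:E) <= M * M)%E.
Proof. exact: (theorem_aux HRam erefl). Qed.
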